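(* Let $\mathcal{X}$ be an input space, $\mathcal{Y}=\{-1,1\}$, $\mathcal{D}$ a distribution on $\mathcal{X}\times\mathcal{Y}$ with marginal $\mathcal{P}_{\mathcal{X}}$, and $(x,y)\sim\mathcal{D}$ with $y$ the ground-truth label. Let $\mathcal{F},\mathcal{G}:\mathcal{X}\to\mathcal{Y}$ be classifiers, $\delta,\rho,\epsilon\in(0,1)$ constants, and $\mathcal{A}:\mathcal{X}\to\mathcal{X}$ an attack strategy. Suppose $\mathcal{A}$ is $\rho$-conservative and $\mathcal{F},\mathcal{G}$ have risk at most $\epsilon$. If $\mathcal{A}$ is $(\delta,\mathcal{F})$-effective, then it is also $(\delta+4\epsilon+\rho,\mathcal{G})$-effective.
   Context: Risk of $\mathcal{F}$: $\Pr(\mathcal{F}(x)\neq y)$. Let $\mathcal{P}_{\mathcal{A}(x)}$ denote the distribution of $\mathcal{A}(x)$ for $x\sim\mathcal{P}_{\mathcal{X}}$; $\mathcal{A}$ is $\rho$-conservative if $\sup_{C\subseteq\mathcal{X}}|\mathcal{P}_{\mathcal{X}}(C)-\mathcal{P}_{\mathcal{A}(x)}(C)|\le\rho$. The attack is $(\alpha,\mathcal{F})$-effective (untargeted) if $\Pr(\mathcal{F}(\mathcal{A}(x))\neq y)\ge 1-\alpha$. *)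

(* Defs.v *)
From HB Require Import structures.
From mathcomp Require Import all_boot all_order all_algebra.
From mathcomp Require Import all_classical all_reals all_analysis.
Set Implicit Arguments. Unset Strict Implicit. Unset Printing Implicit Defensive.
Import Order.TTheory GRing.Theory Num.Theory.
Local Open Scope classical_set_scope.
Local Open Scope ring_scope.

(* Labels Y = {-1,1} are encoded by bool (true = 1, false = -1);
   only equality/inequality of labels matters. *)
Definition label := bool.

Section Defs.
Context {R : realType} {dO dX : measure_display}
        {Omega : measurableType dO} {X : measurableType dX}.
Variable (P : probability Omega R) (x : Omega -> X) (y : Omega -> label).

Definition risk (F : X -> label) : \bar R :=
  P [set w | F (x w) != y w].

Definition conservative (A : X -> X) (rho : R) : Prop :=
  forall C : set X, measurable C ->
    (`| P (x @^-1` C) - P ((fun w => A (x w)) @^-1` C) | <= rho%:E)%E.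

Definition effective (A : X -> X) (alpha : R) (F : X -> label) : Prop :=
  ((1 - alpha)%:E <= P [set w | F (A (x w)) != y w])%E.
End Defs.

(* Main.v *)
Require Import Defs.
From HB Require Import structures.
From mathcomp Require Import all_boot all_order all_algebra.
From mathcomp Require Import all_classical all_reals all_analysis.
From mathcomp Require Import lra.
Import Order.TTheory GRing.Theory Num.Theory.
Local Open Scope classical_set_scope.
Local Open Scope ring_scope.

Lemma meas_neq (dO : measure_display) (Omega : measurableType dO)
  (f g : Omega -> bool) :
  measurable_fun setT f -> measurable_fun setT g ->
  measurable [set w | f w != g w].
Proof.
move=> mf mg.
have pre : forall h : Omega -> bool, measurable_fun setT h ->
  forall b, measurable (h @^-1` [set b]).
  move=> h mh b; rewrite -[_ @^-1` _]setTI; exact: mh.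
have -> : [set w | f w != g w] =
  (f @^-1` [set true] `&` g @^-1` [set false]) `|`
  (f @^-1` [set false] `&` g @^-1` [set true]).
  apply/seteqP; split => w /=.
    by case: (f w); case: (g w) => //= _; [left|right].
  by case: (f w); case: (g w) => //= -[] [].
by apply: measurableU; apply: measurableI; apply: pre.
Qed.

Theorem theorem5 (R : realType) (dO dX : measure_display)
  (Omega : measurableType dO) (X : measurableType dX)
  (P : probability Omega R) (x : Omega -> X) (y : Omega -> label)
  (F G : X -> label) (A : X -> X) (delta rho eps : R) :
  measurable_fun setT x -> measurable_fun setT y ->
  measurable_fun setT F -> measurable_fun setT G -> measurable_fun setT A ->
  0 < delta < 1 -> 0 < rho < 1 -> 0 < eps < 1 ->
  conservative P x A rho ->
  (risk P x y F <= eps%:E)%E -> (risk P x y G <= eps%:E)%E ->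
  effective P x y A delta F ->
  effective P x y A (delta + 4 * eps + rho) G.
Proof.
move=> mx my mF mG mA /andP[d0 d1] /andP[r0 r1] /andP[e0 e1] cons rF rG eF.
rewrite /effective /risk in rF rG eF *.
have mAx : measurable_fun setT (fun w => A (x w)) by exact: measurableT_comp.
set C := [set z | F z != G z].
have mC : measurable C by exact: (@meas_neq _ _ F G mF mG).
have mFx := measurableT_comp mF mx.
have mGx := measurableT_comp mG mx.
have mFAx := measurableT_comp mF mAx.
have mGAx := measurableT_comp mG mAx.
have mEF : measurable [set w | F (x w) != y w] by exact: (@meas_neq _ _ (F \o x) y mFx my).
have mEG : measurable [set w | G (x w) != y w] by exact: (@meas_neq _ _ (G \o x) y mGx my).
have mEFA : measurable [set w | F (A (x w)) != y w] by exact: (@meas_neq _ _ (F \o (fun w => A (x w))) y mFAx my).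
have mEGA : measurable [set w | G (A (x w)) != y w] by exact: (@meas_neq _ _ (G \o (fun w => A (x w))) y mGAx my).
have mCx : measurable (x @^-1` C) by rewrite -[_ @^-1` _]setTI; exact: mx.
have mCA : measurable ((fun w => A (x w)) @^-1` C)
  by rewrite -[_ @^-1` _]setTI; exact: mAx.
have h1 : (P (x @^-1` C) <= P [set w | F (x w) != y w] + P [set w | G (x w) != y w])%E.
  apply: le_trans (measureU2 P mEF mEG).
  apply: le_measure; rewrite ?inE //; first exact: measurableU.
  move=> w /=; rewrite /C /=.
  by case: (F (x w)); case: (G (x w)); case: (y w) => //= _; first [by left | by right].
have h2 : (P [set w | F (A (x w)) != y w] <=
   P [set w | G (A (x w)) != y w] + P ((fun w => A (x w)) @^-1` C))%E.
  apply: le_trans (measureU2 P mEGA mCA).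
  apply: le_measure; rewrite ?inE //; first exact: measurableU.
  move=> w /=; rewrite /C /=.
  by case: (F (A (x w))); case: (G (A (x w))); case: (y w) => //= _; first [by left | by right].
have h3 := cons C mC.
have fin : forall S, measurable S -> exists a : R, P S = a%:E.
  move=> S mS; exists (fine (P S)); rewrite fineK //; exact: fin_num_measure.
have [a1 Ea1] := fin _ mCx.
have [a2 Ea2] := fin _ mEF.
have [a3 Ea3] := fin _ mEG.
have [a4 Ea4] := fin _ mEFA.
have [a5 Ea5] := fin _ mEGA.
have [a6 Ea6] := fin _ mCA.
rewrite Ea1 Ea2 Ea3 -EFinD lee_fin in h1.
rewrite Ea4 Ea5 Ea6 -EFinD lee_fin in h2.
rewrite Ea1 Ea6 -EFinB /= lee_fin ler_norml in h3.
rewrite Ea2 lee_fin in rF. rewrite Ea3 lee_fin in rG.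
rewrite Ea4 lee_fin in eF. rewrite Ea5 lee_fin.
move/andP: h3 => [h3 h4].
clear -h1 h2 rF rG eF h3 e0. lra.
Qed.
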